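(* Let $t\ge 1$ and $n\ge 1$ be integers, let $L_n$ be the line (path graph) on the vertices $x_1,\dots,x_n$ with edges $\{x_k,x_{k+1}\}$, $k=1,\dots,n-1$, and let $S=\Bbbk[x_1,\dots,x_n]$. For all $i\ge 1$, $$b_{i,n}(S/I_t(L_n))=\begin{cases}\delta_{i,\frac{2n}{t+1}} & \text{if } n\equiv 0\pmod{t+1},\\ \delta_{i+1,\frac{2n+2}{t+1}} & \text{if } n\equiv t\pmod{t+1},\\ 0 & \text{otherwise.}\end{cases}$$
   Context: $\Bbbk$ is a field. For a simple graph $G$ whose vertices are variables of $S$ and $t\ge 1$, the path ideal $I_t(G)$ is the ideal generated by all monomials $x_{i_1}\cdots x_{i_t}$ where $x_{i_1},\dots,x_{i_t}$ are $t$ distinct vertices with consecutive ones adjacent in $G$ (it is $0$ if no such path exists). $b_{i,j}(S/I)=\dim_\Bbbk\operatorname{Tor}^S_i(S/I,\Bbbk)_j$ denotes the graded Betti number in homological degree $i$ and internal degree $j$. $\delta$ is the Kronecker delta. *)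

(* Defs.v *)
From HB Require Import structures.
From mathcomp Require Import all_boot all_order all_algebra.
Set Implicit Arguments. Unset Strict Implicit. Unset Printing Implicit Defensive.
Import GRing.Theory.

(* Vertices x_1..x_n of S = k[x_1..x_n] are indexed by 'I_n (x_{k+1} <-> k).
   A simple graph is a relation on 'I_n; a monomial is an exponent vector
   'I_n -> nat. *)

Definition line_graph (n : nat) : rel 'I_n :=
  fun a b => (a.+1 == b :> nat) || (b.+1 == a :> nat).

(* Membership of a monomial x^m in the path ideal I_t(G): the monomial ideal
   generated by x_{i_1}...x_{i_t} over paths of t distinct vertices with
   consecutive ones adjacent; x^m lies in it iff some generator divides it. *)
Definition in_path_ideal (n : nat) (G : rel 'I_n) (t : nat) (m : 'I_n -> nat) : bool :=
  [exists p : t.-tuple 'I_n,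
     [&& uniq p,
         (if val p is v :: p' then path G v p' else true)
       & all (fun v => 0 < m v) p]].

(* Graded Betti numbers of S/I for a monomial ideal I (given by its monomial
   membership predicate), computed as Tor^S_i(S/I,k)_j = H_i(K(x; S/I))_j,
   the homology of the Koszul complex on x_1..x_n tensored with S/I.
   K_i(x;S/I)_j has k-basis  m * e_F  with |F| = i, m a monomial of degree
   j - i not in I.  Basis candidates: pairs (F, m) with exponents <= j. *)
Section Koszul.
Variables (F : fieldType) (n : nat) (inI : ('I_n -> nat) -> bool) (j : nat).

Definition kbasis := ({set 'I_n} * {ffun 'I_n -> 'I_j.+1})%type.

Definition kvalid (i : nat) (u : kbasis) : bool :=
  [&& #|u.1| == i, i <= j,
      \sum_(l < n) (u.2 l : nat) == j - i
    & ~~ inI (fun l => (u.2 l : nat))].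

(* Coefficient of v in d(u), d(m e_F) = sum_{k in F} (-1)^{#{l in F, l<k}} x_k m e_{F\k}. *)
Definition kdiff_entry (i : nat) (u v : kbasis) : F :=
  if kvalid i u && kvalid i.-1 v then
    (\sum_(k in u.1)
      (if (v.1 == u.1 :\ k) &&
          [forall l, (v.2 l : nat) == (u.2 l + (l == k))%N]
       then ((-1) ^+ #|[set l in u.1 | (l < k)%N]|)%R else 0%R))%R
  else 0%R.

(* Matrix of d_i : K_i -> K_{i-1} (row-vector convention). *)
Definition kdiff (i : nat) : 'M[F]_(#|{: kbasis}|, #|{: kbasis}|) :=
  \matrix_(a, b) kdiff_entry i (enum_val a) (enum_val b).

(* b_{i,j}(S/I) = dim ker d_i - rank d_{i+1}. *)
Definition betti (i : nat) : nat :=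
  #|[set u | kvalid i u]| - \rank (kdiff i) - \rank (kdiff i.+1).
End Koszul.
Arguments line_graph n : clear implicits.

(* Main.v *)
Require Import Defs.
From mathcomp Require Import all_boot all_order all_algebra.
From mathcomp Require Import zify.

Module Part_LA.
From mathcomp Require Import all_boot all_order all_algebra.
Set Implicit Arguments. Unset Strict Implicit. Unset Printing Implicit Defensive.
Import GRing.Theory.
Local Open Scope ring_scope.

Section LA.
Variables (F : fieldType) (T : finType).

Definition mkmx (E : T -> T -> F) : 'M[F]_(#|{: T}|, #|{: T}|) :=
  \matrix_(a, b) E (enum_val a) (enum_val b).

Lemma sum_enum (G : T -> F) :
  \sum_(b < #|{: T}|) G (enum_val b) = \sum_(v : T) G v.
Proof. by rewrite -(big_enum_val G). Qed.

Lemma rank_lower (E : T -> T -> F) (U : {set T}) (psi : T -> T) (rho : T -> nat) :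
  (forall u, u \in U -> E u (psi u) != 0) ->
  (forall u u', u \in U -> u' \in U -> u != u' -> E u (psi u') != 0 ->
      (rho u < rho u')%N) ->
  (#|U| <= \rank (mkmx E))%N.
Proof.
move=> Hd Ht.
pose f (r : 'I_#|U|) : 'I_#|{: T}| := enum_rank (enum_val r).
have -> : #|U| = \rank (rowsub f (mkmx E)).
  apply/esym/eqP; apply: inj_row_free => v Hv.
  apply/rowP => r0; rewrite mxE.
  apply/eqP; apply/negPn/negP => Hr0.
  have [rmin Hmin Hmin2] := arg_minnP (P := fun r => v 0 r != 0) (fun r => rho (enum_val r)) Hr0.
  have [b0 Hb0] : exists b0 : 'I_#|{: T}|, enum_val b0 = psi (enum_val rmin).
    by exists (enum_rank (psi (enum_val rmin))); rewrite enum_rankK.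
  have := congr1 (fun M : 'M[F]_(1, #|{: T}|) => M 0 b0) Hv.
  rewrite !mxE (bigD1 rmin) //= big1.
    rewrite !mxE !enum_rankK Hb0 addr0 => /eqP; rewrite mulf_eq0 (negbTE Hmin) /=.
    by rewrite (negbTE (Hd _ (enum_valP rmin))).
  move=> r Hr; rewrite !mxE !enum_rankK Hb0.
  have [->|Hvr] := eqVneq (v 0 r) 0; first by rewrite mul0r.
  have [HE|HE] := eqVneq (E (enum_val r) (psi (enum_val rmin))) 0; first by rewrite HE mulr0.
  have := Ht _ _ (enum_valP r) (enum_valP rmin).
  rewrite (inj_eq enum_val_inj) Hr => /(_ isT HE).
  by rewrite ltnNge Hmin2.
by apply: mxrankS; apply: rowsub_sub.
Qed.

Lemma rank_sum (E1 E0 : T -> T -> F) (V : {set T}) :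
  (forall u v, E1 u v != 0 -> v \in V) ->
  (forall v w, E0 v w != 0 -> v \in V) ->
  (forall u w, \sum_v E1 u v * E0 v w = 0) ->
  (\rank (mkmx E1) + \rank (mkmx E0) <= #|V|)%N.
Proof.
move=> H1 H0 H10.
pose Vm : 'M[F]_(#|V|, #|{: T}|) :=
  \matrix_(r, b) ((enum_val r == enum_val b :> T)%:R).
pose P := Vm^T *m Vm.
have HP a b : P a b = ((a == b) && (enum_val a \in V))%:R.
  rewrite !mxE.
  under eq_bigr do rewrite !mxE.
  rewrite -(big_enum_val (fun x => ((x == enum_val a)%:R * (x == enum_val b)%:R : F))) /=.
  have [->|Hab] := eqVneq a b.
    case: (boolP (enum_val b \in V)) => Hb /=.
      rewrite (bigD1 (enum_val b)) //= eqxx mulr1 big1 ?addr0 // => x /andP[_ /negbTE ->].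
      by rewrite mul0r.
    rewrite big1 // => x Hx; case: eqP => [Ex|]; last by rewrite mul0r.
    by rewrite -Ex Hx in Hb.
  rewrite /= big1 // => x _; case: eqP => [->|]; last by rewrite mul0r.
  by rewrite (inj_eq enum_val_inj) (negbTE Hab) mulr0.
have D1P : mkmx E1 *m P = mkmx E1.
  apply/matrixP => a b; rewrite !mxE (bigD1 b) //= HP eqxx big1 ?addr0.
    case: (boolP (enum_val b \in V)) => Hb; first by rewrite mxE mulr1.
    by rewrite mulr0; apply/esym/eqP; apply: contraNT Hb => /H1.
  by move=> c /negbTE Hc; rewrite HP Hc mulr0.
have PD0 : P *m mkmx E0 = mkmx E0.
  apply/matrixP => a b; rewrite !mxE (bigD1 a) //= HP eqxx big1 ?addr0.
    case: (boolP (enum_val a \in V)) => Ha; first by rewrite mxE mul1r.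
    by rewrite mul0r; apply/esym/eqP; apply: contraNT Ha => /H0.
  by move=> c /negbTE Hc; rewrite HP eq_sym Hc mul0r.
have D10 : mkmx E1 *m mkmx E0 = 0.
  apply/matrixP => a b; rewrite !mxE.
  under eq_bigr do rewrite !mxE.
  by rewrite (sum_enum (fun v => E1 (enum_val a) v * E0 v (enum_val b))) H10.
have := mxrank_mul_min (mkmx E1 *m Vm^T) (Vm *m mkmx E0).
rewrite mulmxA -(mulmxA _ _ Vm) -/P D1P D10 mxrank0 leqn0 subn_eq0 => H.
apply: leq_trans H; apply: leq_add.
  by rewrite -{1}D1P /P mulmxA mxrankM_maxl.
by rewrite -{1}PD0 /P -mulmxA mxrankM_maxr.
Qed.

End LA.

End Part_LA.
Import Part_LA.

Module Part_KZ.
From mathcomp Require Import all_boot all_order all_algebra zify.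
Set Implicit Arguments. Unset Strict Implicit. Unset Printing Implicit Defensive.
Import GRing.Theory.

Section AS.
Local Open Scope ring_scope.
Lemma antisym_sum (F : fieldType) n (S : {set 'I_n}) (h : 'I_n -> 'I_n -> F) :
  (forall k l, k \in S -> l \in S -> k != l -> h k l = - h l k) ->
  \sum_(k in S) \sum_(l in S :\ k) h k l = 0.
Proof.
move=> Ha.
pose A := \sum_k \sum_l (if [&& k \in S, l \in S & (l < k)%N] then h k l else 0).
pose B := \sum_k \sum_l (if [&& k \in S, l \in S & (k < l)%N] then h k l else 0).
have -> : \sum_(k in S) \sum_(l in S :\ k) h k l = A + B.
  rewrite /A /B -big_split big_mkcond /=; apply: eq_bigr => k _.
  rewrite -big_split /=; case: (boolP (k \in S)) => Hk /=.
    rewrite big_mkcond /=; apply: eq_bigr => l _; rewrite !inE.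
    case: (boolP (l \in S)) => Hl /=; last by rewrite andbF addr0.
    rewrite andbT; case: (ltngtP l k) => H.
    - by rewrite neq_ltn H addr0.
    - by rewrite neq_ltn H orbT add0r.
    - by rewrite (val_inj H) eqxx addr0.
  by rewrite big1 // => l _; rewrite addr0.
have -> : B = - A.
  rewrite /B /A exchange_big /= -sumrN; apply: eq_bigr => k _.
  rewrite -sumrN; apply: eq_bigr => l _.
  case: (boolP (k \in S)) => Hk; case: (boolP (l \in S)) => Hl //=; try by rewrite oppr0.
  case: ltnP => H; last by rewrite oppr0.
  by rewrite (Ha _ _ Hl Hk) // neq_ltn H.
by rewrite subrr.
Qed.
End AS.

Section KZ.
Variables (F : fieldType) (n j : nat) (inI : ('I_n -> nat) -> bool).
Hypothesis mono : forall m m' : 'I_n -> nat,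
  (forall l, 0 < m l -> 0 < m' l) -> inI m -> inI m'.

Local Notation K := (kbasis n j).

Definition isface (u v : K) (k : 'I_n) : bool :=
  (v.1 == u.1 :\ k) && [forall l, (v.2 l : nat) == (u.2 l + (l == k))%N].

Definition sgn (S : {set 'I_n}) (k : 'I_n) : F :=
  ((-1) ^+ #|[set l in S | (l < k)%N]|)%R.

Definition dn (u : K) (k : 'I_n) : K :=
  (u.1 :\ k, [ffun l => inord (u.2 l + (l == k))]).

Lemma card_lt_D1 (S : {set 'I_n}) k l : k \in S ->
  #|[set x in S | (x < l)%N]| = ((k < l)%N + #|[set x in S :\ k | (x < l)%N]|)%N.
Proof.
move=> Hk; rewrite (cardsD1 k) inE Hk /=; congr (_ + _)%N.
by apply: eq_card => x; rewrite !inE andbA.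
Qed.

Lemma sgn_swap (S : {set 'I_n}) k l : k \in S -> l \in S -> k != l ->
  (sgn S k * sgn (S :\ k) l = - (sgn S l * sgn (S :\ l) k))%R.
Proof.
move=> Hk Hl Hkl; rewrite /sgn (card_lt_D1 l Hk) (card_lt_D1 k Hl).
case: (ltngtP k l) => H.
- by rewrite /= add0n add1n exprS mulN1r mulNr opprK mulrC.
- by rewrite /= add0n add1n exprS mulN1r mulNr mulrC.
- by rewrite (val_inj H) eqxx in Hkl.
Qed.

Lemma entryE i (u v : K) : kdiff_entry F inI i u v =
  if kvalid inI i u && kvalid inI i.-1 v then
    (\sum_(k in u.1) (if isface u v k then sgn u.1 k else 0))%R else 0%R.
Proof. by []. Qed.

Lemma dn2 (u : K) (k l : 'I_n) : k \in u.1 -> (u.2 k < j)%N -> (dn u k).2 l = u.2 l + (l == k) :> nat.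
Proof.
move=> _ Hk; rewrite /dn /= ffunE inordK //.
case: eqP => [->|_]; first by rewrite addn1 ltnS.
by rewrite addn0 ltn_ord.
Qed.

Lemma dn2' (u : K) (k l : 'I_n) : (u.2 k < j)%N -> (dn u k).2 l = u.2 l + (l == k) :> nat.
Proof.
move=> Hk; rewrite /dn /= ffunE inordK //.
case: eqP => [->|_]; first by rewrite addn1 ltnS.
by rewrite addn0 ltn_ord.
Qed.

Lemma isfaceE (u v : K) k : isface u v k = (v == dn u k) && (u.2 k < j)%N.
Proof.
rewrite /isface; apply/idP/idP.
  case/andP => /eqP H1 /forallP H2.
  have Hk : (u.2 k < j)%N.
    by have := H2 k; rewrite eqxx addn1 => /eqP <-; rewrite -ltnS ltn_ord.
  rewrite Hk andbT; case: v H1 H2 => S m /= -> H2.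
  apply/eqP; congr pair; apply/ffunP => l; apply: val_inj.
  by rewrite /= (eqP (H2 l)) ffunE inordK // -(eqP (H2 l)) ltn_ord.
case/andP => /eqP -> Hk; rewrite /= eqxx /=.
by apply/forallP => l; rewrite (dn2' _ Hk).
Qed.

Lemma setD1_inj (S : {set 'I_n}) c k : c \in S -> k \in S -> S :\ c = S :\ k -> c = k.
Proof.
move=> Hc Hk E; apply/eqP; apply/negPn/negP => Hck.
have : k \in S :\ c by rewrite !inE eq_sym Hck.
by rewrite E !inE eqxx.
Qed.

Lemma entry_dn i (u : K) c : c \in u.1 -> (u.2 c < j)%N ->
  kvalid inI i u -> kvalid inI i.-1 (dn u c) ->
  kdiff_entry F inI i u (dn u c) = sgn u.1 c.
Proof.
move=> Hc Hcj Hu Hv; rewrite entryE Hu Hv /=.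
rewrite (bigD1 c) //= isfaceE eqxx Hcj /= big1 ?GRing.addr0 // => k /andP[Hk Hkc].
rewrite isfaceE; case: eqP => //= E.
have : (dn u c).1 = (dn u k).1 by rewrite E.
by move/(setD1_inj Hc Hk) => Eck; rewrite Eck eqxx in Hkc.
Qed.

Lemma entry_nz i (u v : K) : kdiff_entry F inI i u v != 0%R ->
  [/\ kvalid inI i u, kvalid inI i.-1 v &
      exists2 k, k \in u.1 & (v = dn u k) /\ (u.2 k < j)%N].
Proof.
rewrite entryE; case: andP => [[H1 H2]|]; last by rewrite eqxx.
move=> Hs; split => //.
have [k Hk Hf] : exists2 k, k \in u.1 & isface u v k.
  apply/exists_inP; apply: contraNT Hs; rewrite negb_exists_in => /forall_inP H.
  by apply/eqP; apply: big1 => k Hk; rewrite (negbTE (H k Hk)).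
by exists k => //; move: Hf; rewrite isfaceE => /andP[/eqP -> ->].
Qed.


Lemma sum_eqk (k : 'I_n) : (\sum_(l < n) (l == k : nat))%N = 1%N.
Proof. by rewrite (bigD1 k) //= eqxx big1 // => l /negbTE ->. Qed.

Lemma sum_dn (u : K) k : (u.2 k < j)%N ->
  (\sum_(l < n) ((dn u k).2 l : nat))%N = (\sum_(l < n) (u.2 l : nat)).+1.
Proof.
move=> Hk; rewrite (eq_bigr _ (fun l _ => dn2' l Hk)) big_split /= sum_eqk.
by rewrite addn1.
Qed.

Definition gkl i (u w : K) k l :=
  [&& kvalid inI i.-1 w, w.1 == u.1 :\ k :\ l &
      [forall l', (w.2 l' : nat) == (u.2 l' + (l' == k) + (l' == l))%N]].

Lemma gkl_sym i u w k l : gkl i u w k l = gkl i u w l k.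
Proof.
rewrite /gkl setDDl setUC -setDDl; congr [&& _, _ & _].
by apply: eq_forallb => l'; rewrite addnAC.
Qed.

Lemma gkl_imp i (u w : K) k l : kvalid inI i.+1 u -> k \in u.1 ->
  gkl i u w k l -> (u.2 k < j)%N && kvalid inI i (dn u k).
Proof.
move=> Hu Hk /and3P[Hw _ /forallP Hw2].
have Hkj : (u.2 k < j)%N.
  by have := ltn_ord (w.2 k); rewrite (eqP (Hw2 k)) eqxx; lia.
rewrite Hkj /=.
case/and4P: Hu => /eqP Hc Hij /eqP Hs Hn.
apply/and4P; split.
- by move: Hc; rewrite (cardsD1 k) Hk add1n => -[->].
- by apply: ltnW.
- by rewrite sum_dn // Hs; apply/eqP; rewrite -subSn // subSS.
- apply: contra Hn => H; case/and4P: Hw => _ _ _ Hwn.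
  apply: contraR Hwn => _.
  apply: mono H => l' /=; rewrite (dn2' _ Hkj) (eqP (Hw2 l')) => H.
  by apply: leq_trans H _; rewrite leq_addr.
Qed.

Lemma isface_g i (u w : K) k l : (u.2 k < j)%N -> kvalid inI i.-1 w ->
  isface (dn u k) w l = gkl i u w k l.
Proof.
move=> Hk Hw; rewrite /isface /gkl Hw /=; congr (_ && _).
by apply: eq_forallb => l'; rewrite (dn2' _ Hk).
Qed.

Lemma dd0 i (u w : K) :
  (\sum_v kdiff_entry F inI i.+1 u v * kdiff_entry F inI i v w = 0)%R.
Proof.
case Hu: (kvalid inI i.+1 u); last first.
  by apply: big1 => v _; rewrite entryE Hu /= GRing.mul0r.
have step1 v : (kdiff_entry F inI i.+1 u v * kdiff_entry F inI i v w =
  (\sum_(k in u.1) (if isface u v k then sgn u.1 k else 0)) * kdiff_entry F inI i v w)%R.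
  rewrite entryE Hu /=; case Hv: (kvalid inI i v) => //.
  by rewrite (entryE _ v) Hv /= !GRing.mulr0.
rewrite (eq_bigr _ (fun v _ => step1 v)).
under eq_bigr do rewrite big_distrl /=.
rewrite exchange_big /=.
transitivity (\sum_(k in u.1) \sum_(l in u.1 :\ k)
   (if gkl i u w k l then sgn u.1 k * sgn (u.1 :\ k) l else 0))%R; last first.
  apply: antisym_sum => k l Hk Hl Hkl.
  rewrite gkl_sym; case: (gkl i u w l k); last by rewrite GRing.oppr0.
  exact: sgn_swap.
apply: eq_bigr => k Hk.
rewrite (bigD1 (dn u k)) //= isfaceE eqxx /=.
rewrite big1 ?GRing.addr0; last first.
  by move=> v /negbTE Hv; rewrite isfaceE Hv /= GRing.mul0r.
case Hkj: (u.2 k < j)%N; last first.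
  rewrite GRing.mul0r; apply/esym/big1 => l Hl; case Hg: gkl => //.
  by have := gkl_imp Hu Hk Hg; rewrite Hkj.
rewrite entryE /=.
case Hd: (kvalid inI i (dn u k)) => /=; last first.
  rewrite GRing.mulr0; apply/esym/big1 => l Hl; case Hg: gkl => //.
  by have := gkl_imp Hu Hk Hg; rewrite Hd andbF.
case Hw: (kvalid inI i.-1 w); last first.
  rewrite GRing.mulr0; apply/esym/big1 => l Hl; case Hg: gkl => //.
  by move: Hg; rewrite /gkl Hw.
rewrite GRing.mulr_sumr; apply: eq_bigr => l Hl.
rewrite (isface_g l Hkj Hw); case: gkl => //; by rewrite GRing.mulr0.
Qed.

End KZ.

End Part_KZ.
Import Part_KZ.

Module Part_W.
From mathcomp Require Import all_boot all_order all_algebra zify.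
Set Implicit Arguments. Unset Strict Implicit. Unset Printing Implicit Defensive.

Section W.
Variables (n' t : nat).
Local Notation n := n'.+1.
Hypothesis ht : 0 < t.
Local Notation inI := (in_path_ideal (line_graph n) t).

Lemma inI_mono (m m' : 'I_n -> nat) :
  (forall l, 0 < m l -> 0 < m' l) -> inI m -> inI m'.
Proof.
move=> H /existsP[p /and3P[H1 H2 H3]]; apply/existsP; exists p.
rewrite H1 H2 /=; apply/allP => x Hx; exact: H (allP H3 x Hx).
Qed.

Lemma inI_ext (m m' : 'I_n -> nat) :
  (forall l, (0 < m l) = (0 < m' l)) -> inI m = inI m'.
Proof.
move=> H; apply/idP/idP; apply: inI_mono => l; by rewrite H.
Qed.

Lemma path_iota (s a k : nat) : s + a + k < n ->
  path (line_graph n) (inord (s + a) : 'I_n) [seq (inord (s + r) : 'I_n) | r <- iota a.+1 k].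
Proof.
elim: k a => [|k IH] a Hk //=.
apply/andP; split; last by apply: IH; lia.
rewrite /line_graph !inordK; [|lia|lia].
by rewrite addnS eqxx.
Qed.

Lemma W1 (m : 'I_n -> nat) s : s + t <= n ->
  (forall l : 'I_n, s <= l < s + t -> 0 < m l) -> inI m.
Proof.
move=> Hs Hm.
pose ps := [seq (inord (s + r) : 'I_n) | r <- iota 0 t].
have Hsz : size ps == t by rewrite size_map size_iota.
apply/existsP; exists (Tuple Hsz); rewrite /=; apply/and3P; split.
- rewrite map_inj_in_uniq ?iota_uniq // => a b.
  rewrite !mem_iota !add0n => Ha Hb E; have := congr1 (@nat_of_ord n) E; rewrite !inordK; lia.
- rewrite /ps; case: t ht Hs Hm {Hsz ps} => // t' _ Hs Hm /=.
  by rewrite -[s]addn0; apply: path_iota; lia.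
- apply/allP => x /mapP[r]; rewrite mem_iota add0n => Hr ->.
  by apply: Hm; rewrite inordK; lia.
Qed.

Lemma line_mono (v : 'I_n) p : path (line_graph n) v p -> uniq (v :: p) ->
  (forall r, r < size p -> (nth v p r : nat) = v + r.+1) \/
  (forall r, r < size p -> (nth v p r : nat) + r.+1 = v).
Proof.
elim: p v => [|w p IH] v; first by left.
rewrite /= => /andP[Hvw Hp] /andP[Hv Hu].
have [Hi|Hd] := IH w Hp Hu.
- case/orP: Hvw => /eqP Hvw.
    left => -[|r] Hr /=; first by rewrite /=; lia.
    by rewrite (set_nth_default w) // Hi //; lia.
  case: p {IH Hp Hu} Hi Hv => [|x p] Hi Hv.
    by right => -[|r] //= _; lia.
  exfalso; move: Hv; rewrite !inE negb_or => /andP[_ /negP]; apply.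
  apply/orP; left; apply/eqP/val_inj.
  have := Hi 0 isT; rewrite /=; lia.
- case/orP: Hvw => /eqP Hvw.
    case: p {IH Hp Hu} Hd Hv => [|x p] Hd Hv.
      by left => -[|r] //= _; lia.
    exfalso; move: Hv; rewrite !inE negb_or => /andP[_ /negP]; apply.
    apply/orP; left; apply/eqP/val_inj.
    have := Hd 0 isT; rewrite /=; lia.
  right => -[|r] Hr /=; first by rewrite /=; lia.
  by rewrite (set_nth_default w) //; have := Hd r Hr; lia.
Qed.

Lemma W2 (m : 'I_n -> nat) : inI m ->
  exists s, s + t <= n /\ (forall l : 'I_n, s <= l < s + t -> 0 < m l).
Proof.
case/existsP => -[[|v p'] Hsz] /and3P[/= Hu Hp Ha].
  by move: Hsz; rewrite /= => /eqP Ht; lia.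
have {Hsz} Hsz : (size p').+1 = t by move/eqP: Hsz.
have Hpos x : x \in v :: p' -> 0 < m x.
  by rewrite inE => /orP[/eqP ->|Hx]; case/andP: Ha => // _ /allP; apply.
have [Hi|Hd] := line_mono Hp Hu.
- exists v; split.
    case: p' Hi Hsz {Hp Hu Hpos Ha} => [|x p'] Hi Hsz; first by move: Hsz => /= Hsz; have := ltn_ord v; lia.
    move: Hsz => /= Hsz; have := Hi (size p') (leqnn _); have := ltn_ord (nth v (x :: p') (size p')); move=> H1 H2; rewrite H2 in H1; move: H1; rewrite -Hsz; set q := size _; move=> H1; lia.
  move=> l Hl; apply: Hpos.
  have [El|Nl] := eqVneq (l : nat) (v : nat); first by rewrite inE (val_inj El) eqxx.
  rewrite inE; apply/orP; right.
  have Hr : l - v - 1 < size p' by lia.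
  have := Hi _ Hr => Ev.
  have -> : l = nth v p' (l - v - 1) by apply: ord_inj; rewrite Ev; lia.
  exact: mem_nth.
- have Hvt : t.-1 <= v.
    case: p' Hd Hsz {Hp Hu Hpos Ha} => [|x p'] Hd Hsz; first by rewrite -Hsz.
    have H := Hd (size p') (leqnn _); rewrite -Hsz /=.
    by rewrite -[X in _ <= X]H leq_addl.
  exists (v - t.-1); split; first by have := ltn_ord v; lia.
  move=> l Hl; apply: Hpos.
  have [El|Nl] := eqVneq (l : nat) (v : nat); first by rewrite inE (val_inj El) eqxx.
  rewrite inE; apply/orP; right.
  have Hr : v - l - 1 < size p' by lia.
  have := Hd _ Hr => Ev.
  have -> : l = nth v p' (v - l - 1) by apply: ord_inj; move: Ev; set z := nat_of_ord (nth _ _ _); lia.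
  exact: mem_nth.
Qed.

End W.

End Part_W.
Import Part_W.

Module Part_M1.
From mathcomp Require Import all_boot all_order all_algebra zify.
Set Implicit Arguments. Unset Strict Implicit. Unset Printing Implicit Defensive.

Section Part_M1.
Variables (n' t : nat).
Hypothesis ht : 0 < t.
Local Notation n := n'.+1.
Local Notation K := (kbasis n n).
Local Notation inI := (in_path_ideal (line_graph n) t).
Local Notation valid := (kvalid inI (j:=n)).

Definition aexp (u : K) (l : 'I_n) : nat := u.2 l + (l \in u.1).

Lemma sum_mem (S : {set 'I_n}) : \sum_(l < n) (l \in S : nat) = #|S|.
Proof.
by rewrite -sum1_card [RHS]big_mkcond; apply: eq_bigr => l _; case: (l \in S).
Qed.

Lemma validE i (u : K) : valid i u =
  [&& #|u.1| == i, i <= n, \sum_(l < n) (u.2 l : nat) == n - i & ~~ inI (fun l => u.2 l)].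
Proof. by []. Qed.

Lemma sum_aexp i (u : K) : valid i u -> \sum_(l < n) aexp u l = n.
Proof.
case/and4P => /eqP Hc Hi /eqP Hs _.
by rewrite big_split /= Hs sum_mem Hc subnK.
Qed.

Lemma aexp_le i (u : K) l : valid i u -> aexp u l <= n.
Proof.
move=> Hv; rewrite -(sum_aexp Hv) (bigD1 l) //=; exact: leq_addr.
Qed.

Lemma caseB i (u : K) : valid i u -> (forall l, aexp u l <= 1) -> forall l, aexp u l = 1.
Proof.
move=> Hv H l; apply/eqP; rewrite eqn_leq H /= lt0n; apply/negP => /eqP H0.
have := sum_aexp Hv; rewrite (bigD1 l) //= H0 add0n => E.
have : \sum_(l0 < n | l0 != l) aexp u l0 <= \sum_(l0 < n | l0 != l) 1.
  by apply: leq_sum => l0 _; apply: H.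
rewrite E sum1_card cardC1 card_ord; lia.
Qed.

Definition Bm (S : {set 'I_n}) (l : 'I_n) : nat := l \notin S.
Definition hits (S : {set 'I_n}) := ~~ inI (Bm S).

Lemma caseB_u i (u : K) : valid i u -> (forall l, aexp u l <= 1) ->
  forall l, (u.2 l : nat) = Bm u.1 l.
Proof.
move=> Hv H l; have := caseB Hv H l; rewrite /aexp /Bm.
by case: (l \in u.1) => /=; lia.
Qed.

Lemma caseB_hits i (u : K) : valid i u -> (forall l, aexp u l <= 1) -> hits u.1.
Proof.
move=> Hv H; case/and4P: (Hv) => _ _ _; rewrite /hits.
by rewrite (@inI_ext n' t (Bm u.1) (fun l => u.2 l)) // => l; rewrite (caseB_u Hv H).
Qed.

Lemma hits_win (S : {set 'I_n}) s : hits S -> s + t <= n ->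
  exists l : 'I_n, (l \in S) && (s <= l < s + t).
Proof.
move=> H Hs; apply/existsP; apply: contraR H => /existsPn H.
apply: (W1 ht Hs) => l Hl; have := H l; rewrite Hl andbT /Bm; by case: (l \in S).
Qed.

Lemma win_hits (S : {set 'I_n}) :
  (forall s, s + t <= n -> exists l : 'I_n, (l \in S) && (s <= l < s + t)) -> hits S.
Proof.
move=> H; rewrite /hits; apply/negP => /(W2 ht) [s [Hs Hw]].
have [l /andP[Hl Hl2]] := H s Hs.
by have := Hw l Hl2; rewrite /Bm Hl.
Qed.

End Part_M1.

End Part_M1.
Import Part_M1.

Module Part_M2.
From mathcomp Require Import all_boot all_order all_algebra zify.
Set Implicit Arguments. Unset Strict Implicit. Unset Printing Implicit Defensive.

Section Part_M2.
Variables (n' t : nat).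

Local Notation n := n'.+1.

Definition inS (S : {set 'I_n}) (x : nat) : bool :=
  [exists l : 'I_n, (l \in S) && (nat_of_ord l == x)].

Definition complete (S : {set 'I_n}) (k : nat) : bool :=
  [&& inS S (k * t.+1), inS S (k * t.+1 + t) &
      [forall l : 'I_n, (k * t.+1 < l < k * t.+1 + t) ==> ~~ inS S l]].

Definition lev (S : {set 'I_n}) : nat := find (fun k => ~~ complete S k) (iota 0 n.+1).

Lemma inS_ord S (l : 'I_n) : inS S l = (l \in S).
Proof.
apply/existsP/idP => [[l' /andP[H /eqP E]]|H]; last by exists l; rewrite H eqxx.
by rewrite -(ord_inj E).
Qed.

Lemma inS_lt S x : inS S x -> x < n.
Proof. by case/existsP => l /andP[_ /eqP <-]. Qed.

Lemma inS_exist S x : inS S x -> exists2 l : 'I_n, l \in S & nat_of_ord l = x.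
Proof. by case/existsP => l /andP[H /eqP E]; exists l. Qed.

Lemma complete_lt S k : complete S k -> k * t.+1 + t < n.
Proof. by case/and3P => _ /inS_lt. Qed.

Lemma find_iota (P : pred nat) N k : k < N -> P k ->
  (forall k', k' < k -> ~~ P k') -> find P (iota 0 N) = k.
Proof.
move=> HkN Hk Hb.
have Hhas : has P (iota 0 N) by apply/hasP; exists k => //; rewrite mem_iota.
have Hf := find_size P (iota 0 N); rewrite size_iota in Hf.
have Hlt : find P (iota 0 N) < N by move: Hhas; rewrite has_find size_iota.
case: (ltngtP (find P (iota 0 N)) k) => // H.
- have := nth_find 0 Hhas; rewrite nth_iota // add0n => HP.
  by have := Hb _ H; rewrite HP.
- by have := before_find 0 H; rewrite nth_iota ?add0n // Hk.
Qed.

Lemma lev_eq S k : (forall k', k' < k -> complete S k') -> ~~ complete S k -> lev S = k.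
Proof.
move=> Hc Hk; apply: find_iota => //; last by move=> k' /Hc ->.
case: k Hc Hk => // k Hc _; have := complete_lt (Hc k (leqnn _)); nia.
Qed.

Lemma complete_n S : ~~ complete S n.
Proof. by apply/negP => /complete_lt; nia. Qed.

Lemma lev_spec S : [/\ forall k, k < lev S -> complete S k,
  ~~ complete S (lev S) & lev S * t.+1 <= n].
Proof.
have Hhas : has (fun k => ~~ complete S k) (iota 0 n.+1).
  by apply/hasP; exists n; [rewrite mem_iota; lia | apply: complete_n].
have Hlt : lev S < n.+1 by move: Hhas; rewrite has_find size_iota.
have H1 : forall k, k < lev S -> complete S k.
  by move=> k Hk; have := before_find 0 Hk; rewrite nth_iota ?add0n ?negbK //; lia.
split => //.
- by have := nth_find 0 Hhas; rewrite nth_iota.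
- case E: (lev S) => [|k] //; have := complete_lt (H1 k _); rewrite E; nia.
Qed.

Lemma lev_prefix S k : (forall k', k' < k -> complete S k') ->
  forall x, x < k * t.+1 -> inS S x = (x %% t.+1 == 0) || (x %% t.+1 == t).
Proof.
move=> Hc x Hx.
have Hq : x %/ t.+1 < k by rewrite ltn_divLR.
have := Hc _ Hq; case/and3P => H1 H2 /forallP H3.
have Ex := divn_eq x t.+1.
have Hr := ltn_pmod x (ltn0Sn t).
case: eqP => [Hr0|Hr0] /=; first by rewrite Ex Hr0 addn0.
case: eqP => [Hrt|Hrt]; first by rewrite Ex Hrt.
have Hxn : x < n by have := inS_lt H2; lia.
have := H3 (Ordinal Hxn); rewrite /=.
have -> : x %/ t.+1 * t.+1 < x < x %/ t.+1 * t.+1 + t.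
  apply/andP; split; lia.
by move=> /= /negbTE.
Qed.

Lemma complete_ext S S' k : (forall x, x <= k * t.+1 + t -> inS S x = inS S' x) ->
  complete S k = complete S' k.
Proof.
move=> H; rewrite /complete !H ?leq_addr //; congr [&& _, _ & _].
apply: eq_forallb => l; case: (boolP (_ < l < _)) => //= /andP[_ Hl].
by rewrite H //; lia.
Qed.

End Part_M2.

End Part_M2.
Import Part_M2.

Module Part_M3.
From mathcomp Require Import all_boot all_order all_algebra zify.
Set Implicit Arguments. Unset Strict Implicit. Unset Printing Implicit Defensive.

Section Part_M3.
Variables (n' t : nat).
Hypothesis ht : 0 < t.
Local Notation n := n'.+1.
Local Notation inS := (@inS n').
Local Notation complete := (@complete n' t).
Local Notation lev := (@lev n' t).
Local Notation hits := (@hits n' t).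

Definition Pset : {set 'I_n} := [set l : 'I_n | (l %% t.+1 == 0) || (l %% t.+1 == t)].

Lemma res_block k r : r < t.+1 -> (k * t.+1 + r) %% t.+1 = r.
Proof. by move=> Hr; rewrite modnMDl modn_small. Qed.

Lemma inS_D1 (S : {set 'I_n}) (c : 'I_n) (x : nat) : x != c -> inS (S :\ c) x = inS S x.
Proof.
move=> Hx; apply/existsP/existsP => -[l /andP[Hl Hlx]]; exists l; rewrite Hlx andbT.
  by move: Hl; rewrite !inE => /andP[].
by rewrite !inE Hl andbT; apply: contra Hx => /eqP Elc; rewrite -(eqP Hlx) Elc.
Qed.

Lemma inS_U1 (S : {set 'I_n}) (c : 'I_n) (x : nat) : x != c -> inS (c |: S) x = inS S x.
Proof.
move=> Hx; apply/existsP/existsP => -[l /andP[Hl Hlx]]; exists l; rewrite Hlx andbT.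
  move: Hl; rewrite !inE => /orP[/eqP El|//].
  by move: Hx; rewrite -(eqP Hlx) El eqxx.
by rewrite !inE Hl orbT.
Qed.

Lemma inS_Pset x : inS Pset x = (x < n) && ((x %% t.+1 == 0) || (x %% t.+1 == t)).
Proof.
apply/idP/idP => [/existsP[l /andP[Hl /eqP <-]]|/andP[Hx H]].
  by move: Hl; rewrite inE ltn_ord.
by apply/existsP; exists (Ordinal Hx); rewrite inE /= H eqxx.
Qed.

Lemma hits_iff (S : {set 'I_n}) : hits S =
  [forall s : 'I_n.+1, (s + t <= n) ==> [exists l : 'I_n, (l \in S) && (s <= l < s + t)]].
Proof.
apply/idP/idP => [H|/forallP H].
  apply/forallP => s; apply/implyP => Hs; apply/existsP; exact: hits_win.
apply: win_hits => // s Hs; have Hs' : s < n.+1 by lia.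
by have := H (Ordinal Hs'); rewrite /= Hs /= => /existsP.
Qed.

Lemma lev_del (S : {set 'I_n}) (c : 'I_n) : c \in S -> nat_of_ord c = lev S * t.+1 ->
  lev (S :\ c) = lev S.
Proof.
move=> Hc Ec; have [H1 H2 H3] := lev_spec t S.
apply: lev_eq => [k Hk|].
  rewrite (@complete_ext n' t _ S) ?H1 // => x Hx; apply: inS_D1.
  by apply/eqP => E; move: Hx; rewrite E Ec; nia.
apply/negP => /and3P[Hc' _ _]; move: Hc'.
by rewrite -Ec inS_ord !inE eqxx.
Qed.

Lemma lev_add (S : {set 'I_n}) (c : 'I_n) : hits S -> c \notin S -> nat_of_ord c = lev S * t.+1 ->
  lev (c |: S) = lev S.
Proof.
move=> Hh Hc Ec; have [H1 H2 H3] := lev_spec t S.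
apply: lev_eq => [k Hk|].
  rewrite (@complete_ext n' t _ S) ?H1 // => x Hx; apply: inS_U1.
  by apply/eqP => E; move: Hx; rewrite E Ec; nia.
apply/negP => Hcomp; have Hlt := complete_lt Hcomp.
case/and3P: Hcomp => _ _ /forallP Hf.
have [l /andP[Hl Hw]] := hits_win ht Hh (s := c) ltac:(lia).
have Hlc : l != c by apply: contraNneq Hc => <-.
have Hw' : c < l < c + t.
  by move: Hlc; rewrite -val_eqE /= => Hlc; apply/andP; split; lia.
by have := Hf l; rewrite -Ec Hw' /= inS_ord !inE Hl orbT.
Qed.

Lemma set_Pset (S : {set 'I_n}) : (forall x : 'I_n, (x \in S) = (x \in Pset)) -> S = Pset.
Proof. by move=> H; apply/setP => x; rewrite H. Qed.

Lemma lev_full (S : {set 'I_n}) : lev S * t.+1 = n -> S = Pset.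
Proof.
move=> E; have [H1 _ _] := lev_spec t S.
apply: set_Pset => x; rewrite -inS_ord (lev_prefix H1) ?E // inE //.
Qed.

Lemma crit_shape (S : {set 'I_n}) (c : 'I_n) : hits S -> c \in S -> nat_of_ord c = lev S * t.+1 ->
  ~~ hits (S :\ c) -> n = c + t /\ S = Pset.
Proof.
move=> Hh Hc Ec; have [H1 H2 H3] := lev_spec t S.
rewrite hits_iff negb_forall => /existsP[s]; rewrite negb_imply => /andP[Hs].
move/existsPn => Hw.
have [l /andP[Hl Hlw]] := hits_win ht Hh Hs.
have El : l = c.
  apply/eqP; apply/negPn/negP => Hlc.
  by have := Hw l; rewrite !inE Hlc Hl Hlw.
subst l.
have Hsc : nat_of_ord s = c.
  case Ek : (lev S) Ec => [|k] Ec; first by move: Hlw; rewrite Ec; lia.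
  have := H1 k; rewrite Ek => /(_ (leqnn _)) /and3P[_ Hp _].
  have [p Hp1 Hp2] := inS_exist Hp.
  have Hpc : p != c by rewrite -val_eqE /= Hp2 Ec; apply/eqP; lia.
  have := Hw p; rewrite !inE Hpc Hp1 /= negb_and -!ltnNge.
  by move: Hlw; rewrite Ec Hp2 => ? /orP[]; lia.
have Hint : forall x, c < x < c + t -> ~~ inS S x.
  move=> x /andP[Hx1 Hx3]; apply/negP => Hx2; have [y Hy Ey] := inS_exist Hx2.
  have Hyc : y != c by rewrite -val_eqE /= Ey; apply/eqP; lia.
  by have := Hw y; rewrite !inE Hyc Hy Ey Hsc /= negb_and -!ltnNge => /orP[]; lia.
have Hn : n = c + t.
  apply/eqP; rewrite eqn_leq -Hsc Hs andbT leqNgt; apply/negP => Hlt; rewrite Hsc in Hlt.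
  case: (boolP (inS S (c + t))) => Hct.
    suff : complete S (lev S) by rewrite (negbTE H2).
    apply/and3P; split; [by rewrite -Ec inS_ord | by rewrite -Ec |].
    apply/forallP => x; apply/implyP; rewrite -Ec; exact: Hint.
  have [y /andP[Hy Hyw]] := hits_win ht Hh (s := c.+1) ltac:(lia).
  have Hyc : c < y < c + t.
    apply/andP; split; first by lia.
    case: (ltngtP y (c + t)) => // Hyy; first by lia.
    by move: Hct; rewrite -Hyy inS_ord Hy.
  by have := Hint _ Hyc; rewrite inS_ord Hy.
split => //; apply: set_Pset => x; rewrite inE.
case: (ltngtP x c) => Hx.
- by rewrite -inS_ord (lev_prefix H1) // -Ec.
- have Hx' : c < x < c + t by rewrite Hx /=; have := ltn_ord x; lia.
  rewrite -inS_ord (negbTE (Hint _ Hx')).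
  have -> : nat_of_ord x = lev S * t.+1 + (x - c) by lia.
  rewrite res_block; last by lia.
  apply/esym/negbTE; rewrite negb_or; apply/andP; split; apply/eqP; lia.
- by rewrite (ord_inj Hx) Hc Ec modnMl.
Qed.

Lemma Pset_hits : hits Pset.
Proof.
apply: win_hits => // s Hs.
have Hr := ltn_pmod s (ltn0Sn t).
have Es := divn_eq s t.+1.
case: (boolP (s %% t.+1 == 0)) => Hr0.
  have Hsn : s < n by lia.
  by exists (Ordinal Hsn); rewrite inE /= Hr0 /=; lia.
have Hl : s + (t - s %% t.+1) < n by rewrite -lt0n in Hr0; lia.
exists (Ordinal Hl); rewrite inE /=; apply/andP; split; last by rewrite -lt0n in Hr0; lia.
apply/orP; right; apply/eqP.
have -> : s + (t - s %% t.+1) = s %/ t.+1 * t.+1 + t by lia.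
by rewrite res_block.
Qed.

Lemma Pset_lev k : n = k * t.+1 \/ n = k * t.+1 + t -> lev Pset = k.
Proof.
move=> Hn; apply: lev_eq => [k' Hk'|].
  apply/and3P; split.
  - rewrite inS_Pset modnMl eqxx andbT; case: Hn; nia.
  - rewrite inS_Pset res_block // eqxx orbT andbT; case: Hn; nia.
  - apply/forallP => l; apply/implyP => Hl; rewrite inS_Pset negb_and; apply/orP; right.
    have -> : nat_of_ord l = k' * t.+1 + (l - k' * t.+1) by lia.
    rewrite res_block; last by lia.
    rewrite negb_or; apply/andP; split; apply/eqP; lia.
apply/negP => /complete_lt; case: Hn; lia.
Qed.

Lemma Bm_pos (S : {set 'I_n}) l : (0 < Bm S l) = (l \notin S).
Proof. by rewrite /Bm; case: (l \in S). Qed.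

Lemma Pset_dn (c : 'I_n) : nat_of_ord c + t = n -> c %% t.+1 = 0 -> ~~ hits (Pset :\ c).
Proof.
move=> Hn Hc; rewrite /hits negbK.
apply: (W1 ht (s := c)); first by lia.
move=> l /andP[Hl1 Hl2]; rewrite Bm_pos !inE negb_and negbK.
case: (ltngtP l c) => H; first by lia.
- apply/orP; right; rewrite negb_or.
  have Ec := divn_eq c t.+1; rewrite Hc addn0 in Ec.
  have -> : nat_of_ord l = c %/ t.+1 * t.+1 + (l - c) by lia.
  rewrite res_block; last by lia.
  apply/andP; split; apply/eqP; lia.
- by rewrite (ord_inj H) eqxx.
Qed.

End Part_M3.

End Part_M3.
Import Part_M3.

Module Part_M4.
From mathcomp Require Import all_boot all_order all_algebra zify.
Set Implicit Arguments. Unset Strict Implicit. Unset Printing Implicit Defensive.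

Section Part_M4.
Variables (n' t : nat).
Hypothesis ht : 0 < t.
Local Notation n := n'.+1.
Local Notation K := (kbasis n n).
Local Notation inI := (in_path_ideal (line_graph n) t).
Local Notation valid := (kvalid inI (j:=n)).
Local Notation lev := (@lev n' t).
Local Notation hits := (@hits n' t).
Local Notation Pset := (Pset n' t).
Local Notation aexp := (@aexp n').

Definition piv (u : K) : option 'I_n :=
  if [pick l | 1 < aexp u l] is Some l then Some l else insub (lev u.1 * t.+1).

Definition upc (u : K) (c : 'I_n) : K := (c |: u.1, [ffun l => inord (u.2 l - (l == c))]).

Definition Up i := [set u : K | valid i u &&
  (if piv u is Some c then [&& c \in u.1, u.2 c < n & valid i.-1 (dn u c)] else false)].
Definition Down i := [set u : K | valid i u && (if piv u is Some c then c \notin u.1 else false)].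
Definition Crit i := [set u : K | valid i u] :\: (Up i :|: Down i).
Definition phi (u : K) := if piv u is Some c then upc u c else u.
Definition psi (u : K) := if piv u is Some c then dn u c else u.

Lemma upc2 (u : K) c l : (upc u c).2 l = u.2 l - (l == c) :> nat.
Proof. by rewrite /upc /= ffunE inordK //; have := ltn_ord (u.2 l); lia. Qed.

Lemma aexp_dn (u : K) c : c \in u.1 -> u.2 c < n -> aexp (dn u c) =1 aexp u.
Proof.
move=> Hc Hn l; rewrite /aexp (dn2' _ Hn) /dn /= !inE.
case: (eqVneq l c) => [->|Hl] /=; first by rewrite Hc addn1 addn0.
by rewrite addn0.
Qed.

Lemma aexp_upc (u : K) c : c \notin u.1 -> 0 < u.2 c -> aexp (upc u c) =1 aexp u.
Proof.
move=> Hc Hn l; rewrite /aexp upc2 /upc /= !inE.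
case: (eqVneq l c) => [->|Hl] /=; first by rewrite (negbTE Hc); lia.
by rewrite subn0.
Qed.

Lemma dn_upc (u : K) c : c \notin u.1 -> 0 < u.2 c -> dn (upc u c) c = u.
Proof.
case: u => S m /= Hc Hn; rewrite /dn /upc /=.
congr pair; first by rewrite setU1K.
apply/ffunP => l; apply: val_inj; rewrite ffunE /= inordK ?ffunE ?inordK.
all: have := ltn_ord (m l); case: (eqVneq l c) => [E|E]; [rewrite E; lia|lia].
Qed.

Lemma upc_dn (u : K) c : c \in u.1 -> u.2 c < n -> upc (dn u c) c = u.
Proof.
case: u => S m /= Hc Hn; rewrite /dn /upc /=.
congr pair; first by rewrite setD1K.
apply/ffunP => l; apply: val_inj; rewrite ffunE /= inordK ?ffunE ?inordK.
all: have := ltn_ord (m l); case: (eqVneq l c) => [E|E]; [rewrite E; lia|lia].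
Qed.

Lemma pick_same (u v : K) : aexp u =1 aexp v ->
  [pick l | 1 < aexp u l] = [pick l | 1 < aexp v l].
Proof. by move=> H; apply: eq_pick => l; rewrite /= H. Qed.

Lemma piv_same (u v : K) : aexp u =1 aexp v ->
  ([pick l | 1 < aexp u l] = None -> lev v.1 = lev u.1) -> piv v = piv u.
Proof.
move=> H1 H2; rewrite /piv -(pick_same H1).
by case E: [pick l | 1 < aexp u l] => //; rewrite H2.
Qed.

Lemma pick_none (u : K) : [pick l | 1 < aexp u l] = None -> forall l, aexp u l <= 1.
Proof. by move=> E l; case: pickP E => // H _; have := H l; rewrite ltnNge => /negbFE. Qed.

Lemma valid_upc i (u : K) c : valid i u -> c \notin u.1 -> 0 < u.2 c -> valid i.+1 (upc u c).
Proof.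
case/and4P => /eqP Hc Hi /eqP Hs Hn Hcn Hpos.
have Hsum : \sum_(l < n) ((upc u c).2 l : nat) = (\sum_(l < n) (u.2 l : nat)) - 1.
  have E1 : \sum_(l < n) (u.2 l : nat) = \sum_(l < n) ((upc u c).2 l : nat) + 1.
    rewrite -(sum_eqk c) -big_split /=; apply: eq_bigr => l _; rewrite upc2.
    by case: (eqVneq l c) => [->|]; lia.
  rewrite E1; lia.
have Hin : i < n.
  have : u.2 c <= \sum_(l < n) (u.2 l : nat) by rewrite (bigD1 c) //= leq_addr.
  rewrite Hs; lia.
apply/and4P; split.
- by rewrite /upc /= cardsU1 Hcn Hc.
- exact: Hin.
- by rewrite Hsum Hs; apply/eqP; lia.
- apply: contra Hn; apply: inI_mono => l; rewrite upc2; lia.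
Qed.

Lemma valid_dnA i (u : K) c : valid i u -> c \in u.1 -> 1 < aexp u c ->
  u.2 c < n /\ valid i.-1 (dn u c).
Proof.
move=> Hv Hc Ha.
have Hle' := aexp_le c Hv.
have Hpos : 0 < u.2 c by move: Ha; rewrite /aexp Hc; lia.
have Hcn : u.2 c < n by move: Hle'; rewrite /aexp Hc; lia.
split => //; case/and4P: Hv => /eqP Hcard Hi /eqP Hs Hn.
have Hi1 : 0 < i by rewrite -Hcard; apply/card_gt0P; exists c.
apply/and4P; split.
- by rewrite /dn /= (cardsD1 c) Hc in Hcard; rewrite -Hcard.
- lia.
- by rewrite sum_dn // Hs; apply/eqP; lia.
- rewrite (@inI_ext n' t _ (fun l => u.2 l)) // => l; rewrite (dn2' _ Hcn).
  by case: eqP => [->|]; lia.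
Qed.

Lemma valid_dnB i (u : K) c : valid i u -> (forall l, aexp u l <= 1) -> c \in u.1 ->
  valid i.-1 (dn u c) = hits (u.1 :\ c).
Proof.
move=> Hv HB Hc; have Hu := caseB_u ht Hv HB.
have H0 : u.2 c = 0 :> nat by rewrite Hu /Bm Hc.
have Hcn : u.2 c < n by rewrite H0.
case/and4P: Hv => /eqP Hcard Hi /eqP Hs Hn.
have Hi1 : 0 < i by rewrite -Hcard; apply/card_gt0P; exists c.
have E1 : (#|(dn u c).1| == i.-1) = true.
  by apply/eqP; have := cardsD1 c u.1; rewrite Hc Hcard /= => ->; rewrite add1n.
have E2 : (i.-1 <= n) = true by apply/idP; lia.
have E3 : (\sum_(l < n) ((dn u c).2 l : nat) == n - i.-1) = true.
  by rewrite sum_dn // Hs; apply/eqP; lia.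
rewrite /kvalid E1 E2 E3 /=; congr negb; apply: inI_ext => // l.
rewrite (dn2' _ Hcn) Hu Bm_pos /Bm !inE.
by case: eqP => [->|]; rewrite ?Hc //=; case: (l \in u.1).
Qed.

End Part_M4.

End Part_M4.
Import Part_M4.

Module Part_M5.
From mathcomp Require Import all_boot all_order all_algebra zify.
Set Implicit Arguments. Unset Strict Implicit. Unset Printing Implicit Defensive.
Import GRing.Theory.

Section Part_M5.
Variables (F : fieldType) (n' t : nat).
Hypothesis ht : 0 < t.
Local Notation n := n'.+1.
Local Notation K := (kbasis n n).
Local Notation inI := (in_path_ideal (line_graph n) t).
Local Notation valid := (kvalid inI (j:=n)).
Local Notation lev := (@lev n' t).
Local Notation hits := (@hits n' t).
Local Notation Pset := (Pset n' t).
Local Notation aexp := (@aexp n').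
Local Notation piv := (@piv n' t).
Local Notation upc := (@upc n').
Local Notation Up := (Up n' t).
Local Notation Down := (Down n' t).
Local Notation Crit := (Crit n' t).
Local Notation phi := (@phi n' t).
Local Notation psi := (@psi n' t).

Lemma piv_insub (u : K) c : [pick l | 1 < aexp u l] = None -> piv u = Some c ->
  nat_of_ord c = lev u.1 * t.+1.
Proof.
rewrite /Part_M4.piv => -> ; case: insubP => // c' _ Ec [<-]; exact: Ec.
Qed.

Lemma piv_pick (u : K) c l : [pick l | 1 < aexp u l] = Some l -> piv u = Some c -> c = l.
Proof. by rewrite /Part_M4.piv => -> [->]. Qed.

Lemma key_down i (u : K) c : valid i u -> piv u = Some c -> c \notin u.1 ->
  0 < u.2 c /\ piv (upc u c) = Some c.
Proof.
move=> Hv Hp Hc.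
case E: [pick l | 1 < aexp u l] => [l|].
  have Ecl := piv_pick E Hp; subst l.
  have Ha : 1 < aexp u c by case: pickP E => // x Hx [<-].
  have Hpos : 0 < u.2 c by move: Ha; rewrite /aexp (negbTE Hc); lia.
  split => //; rewrite (piv_same (u := u)) //; first by move=> l; rewrite (aexp_upc ht).
  by rewrite E.
have HB := pick_none E.
have Hu := caseB_u ht Hv HB.
have Hpos : 0 < u.2 c by rewrite Hu /Bm Hc.
split => //; rewrite (piv_same (u := u)) //; first by move=> l; rewrite (aexp_upc ht).
move=> _; apply: (lev_add ht) => //; first exact: (caseB_hits ht Hv HB).
exact: piv_insub E Hp.
Qed.

Lemma key_up (u : K) c : piv u = Some c -> c \in u.1 -> u.2 c < n ->
  piv (dn u c) = Some c.
Proof.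
move=> Hp Hc Hn; rewrite (piv_same (u := u)) //; first by move=> l; rewrite aexp_dn.
move=> E; apply: (lev_del ht) => //; exact: piv_insub E Hp.
Qed.

Lemma Down_to_Up i (u : K) : u \in Down i -> phi u \in Up i.+1 /\ psi (phi u) = u.
Proof.
rewrite inE => /andP[Hv]; rewrite /Part_M4.phi /Part_M4.psi.
case Hp: (piv u) => [c|] // Hc.
have [Hpos Hp'] := key_down Hv Hp Hc.
rewrite Hp'(dn_upc ht) //; split => //.
rewrite inE (valid_upc ht) //= Hp' !inE eqxx /= (upc2 ht) (dn_upc ht) //.
rewrite eqxx Hv andbT; have := ltn_ord (u.2 c); lia.
Qed.

Lemma Up_to_Down i (u : K) : u \in Up i.+1 -> psi u \in Down i /\ phi (psi u) = u.
Proof.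
rewrite inE => /andP[Hv]; rewrite /Part_M4.phi /Part_M4.psi.
case Hp: (piv u) => [c|] // /and3P[Hc Hn Hd].
have Hp' := key_up Hp Hc Hn.
rewrite Hp' (upc_dn ht) //; split => //.
by rewrite inE Hd Hp' /dn /= !inE eqxx.
Qed.

Lemma card_DU i : #|Down i| = #|Up i.+1|.
Proof.
apply/eqP; rewrite eqn_leq; apply/andP; split.
  rewrite -(card_in_imset (f := phi)); last first.
    move=> u v Hu Hv E.
    by rewrite -(Down_to_Up Hu).2 -(Down_to_Up Hv).2 E.
  apply: subset_leq_card; apply/subsetP => x /imsetP[u Hu ->].
  exact: (Down_to_Up Hu).1.
rewrite -(card_in_imset (f := psi)); last first.
  move=> u v Hu Hv E.
  by rewrite -(Up_to_Down Hu).2 -(Up_to_Down Hv).2 E.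
apply: subset_leq_card; apply/subsetP => x /imsetP[u Hu ->].
exact: (Up_to_Down Hu).1.
Qed.

Lemma entry_up i (u : K) : u \in Up i -> kdiff_entry F inI i u (psi u) != 0%R.
Proof.
rewrite inE /Part_M4.psi => /andP[Hv]; case Hp: (piv u) => [c|] // /and3P[Hc Hn Hd].
by rewrite entry_dn // /sgn signr_eq0.
Qed.

Lemma tri i (u u' : K) : u \in Up i -> u' \in Up i -> u != u' ->
  kdiff_entry F inI i u (psi u') != 0%R -> lev u.1 < lev u'.1.
Proof.
move=> Hu Hu' Hne /entry_nz[_ _ [k Hk [Edn Hkn]]].
move: Hu'; rewrite inE /Part_M4.psi in Edn * => /andP[Hv']; case Hp': (piv u') Edn => [c'|] // Edn.
case/and3P => Hc' Hn' Hd'.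
have [Ekc|Nkc] := eqVneq k c'.
  subst k; have := upc_dn ht Hk Hkn; rewrite -Edn (upc_dn ht) // => E.
  by rewrite E eqxx in Hne.
have Ha : aexp u =1 aexp u'.
  by move=> l; rewrite -(aexp_dn Hk Hkn) -(aexp_dn Hc' Hn') Edn.
have Hc'u : c' \notin u.1.
  apply/negP => H; have : c' \in (dn u k).1 by rewrite /dn /= !inE eq_sym Nkc.
  by rewrite -Edn /dn /= !inE eqxx.
move: Hu; rewrite inE => /andP[Hv].
case E: [pick l | 1 < aexp u l] => [l|].
  have E' : [pick l | 1 < aexp u' l] = Some l by rewrite -(pick_same Ha).
  have := piv_pick E' Hp'; move=> Ecl; subst l.
  by rewrite /Part_M4.piv E => /and3P[Hc _ _]; rewrite Hc in Hc'u.
have E' : [pick l | 1 < aexp u' l] = None by rewrite -(pick_same Ha).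
have Ec' := piv_insub E' Hp'.
have ET : u.1 :\ k = u'.1 :\ c' by have := congr1 fst Edn.
have HlT : lev (u'.1 :\ c') = lev u'.1 by apply: (lev_del ht).
have [H1 H2 H3] := lev_spec t u'.1.
have [G1 G2 G3] := lev_spec t (u'.1 :\ c').
case: (ltngtP k c') => Hkc; last by rewrite (ord_inj Hkc) eqxx in Nkc.
- move=> _; rewrite ltnNge; apply/negP => Hle.
  have Hc1 : forall k', k' < lev u'.1 -> complete t u.1 k'.
    by move=> k' Hk'; have [U1 _ _] := lev_spec t u.1; apply: U1; lia.
  have Hc2 : forall k', k' < lev u'.1 -> complete t (u'.1 :\ c') k'.
    by move=> k' Hk'; apply: G1; rewrite HlT.
  have Hk2 : k < lev u'.1 * t.+1 by rewrite -Ec'.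
  have := lev_prefix Hc1 Hk2; rewrite -(lev_prefix Hc2 Hk2) inS_ord Hk -ET.
  by rewrite inS_ord !inE eqxx.
- have Hlev : lev u.1 = lev u'.1.
    apply: lev_eq => [k' Hk'|].
      rewrite -[u.1](setD1K Hk) (@complete_ext n' t _ (u.1 :\ k)).
        by rewrite ET; apply: G1; rewrite HlT.
      move=> x Hx; apply: inS_U1; apply/eqP => Ex; move: Hx; rewrite Ex; nia.
    apply/negP => /and3P[H _ _]; move: H; rewrite -Ec' inS_ord.
    by rewrite (negbTE Hc'u).
  have : piv u = Some c'.
    rewrite /Part_M4.piv E Hlev; case: insubP => [c'' _ Ec''|]; last by rewrite -Ec' ltn_ord.
    by congr Some; apply: ord_inj; rewrite Ec'' Ec'.
  by move=> Hpu; rewrite Hpu => /and3P[Hc _ _]; rewrite Hc in Hc'u.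
Qed.

End Part_M5.

End Part_M5.
Import Part_M5.

Module Part_M6.
From mathcomp Require Import all_boot all_order all_algebra zify.
Set Implicit Arguments. Unset Strict Implicit. Unset Printing Implicit Defensive.

Section Part_M6.
Variables (n' t : nat).
Hypothesis ht : 0 < t.
Local Notation n := n'.+1.
Local Notation K := (kbasis n n).
Local Notation inI := (in_path_ideal (line_graph n) t).
Local Notation valid := (kvalid inI (j:=n)).
Local Notation lev := (@lev n' t).
Local Notation hits := (@hits n' t).
Local Notation Pset := (Pset n' t).
Local Notation aexp := (@aexp n').
Local Notation piv := (@piv n' t).
Local Notation Up := (Up n' t).
Local Notation Down := (Down n' t).
Local Notation Crit := (Crit n' t).

Definition fP (x : nat) : nat := (x %% t.+1 == 0) || (x %% t.+1 == t).

Lemma sum_shift a m (f : nat -> nat) :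
  \sum_(a <= x < a + m) f x = \sum_(0 <= r < m) f (a + r).
Proof.
by rewrite -{1}(add0n a) big_addn addKn; apply: eq_bigr => r _; rewrite addnC.
Qed.

Lemma fP_block k r : r < t.+1 -> fP (k * t.+1 + r) = fP r.
Proof. by move=> Hr; rewrite /fP modnMDl. Qed.

Lemma sum_fP_t : \sum_(0 <= r < t) fP r = 1.
Proof.
rewrite big_ltn // /fP mod0n eqxx /=.
rewrite big_nat_cond big1 // => r /andP[/andP[Hr1 Hr2] _].
rewrite modn_small; last by lia.
have -> : (r == 0) = false by apply/negbTE; rewrite -lt0n.
by have -> : (r == t) = false by apply/negbTE; rewrite neq_ltn Hr2.
Qed.

Lemma sum_fP_t1 : \sum_(0 <= r < t.+1) fP r = 2.
Proof.
by rewrite big_nat_recr //= sum_fP_t /fP modn_small // eqxx orbT.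
Qed.

Lemma sum_fP_k k : \sum_(0 <= x < k * t.+1) fP x = k.*2.
Proof.
elim: k => [|k IH]; first by rewrite mul0n big_geq.
rewrite mulSn addnC (@big_cat_nat _ _ _ (k * t.+1)) //=; last by rewrite leq_addr.
rewrite IH sum_shift (eq_big_nat _ _ (F2 := fP)); first by rewrite sum_fP_t1; lia.
by move=> r Hr; apply: fP_block; lia.
Qed.

Lemma card_Pset_sum : #|Pset| = \sum_(0 <= x < n) fP x.
Proof.
rewrite -(sum_mem Pset) big_mkord; apply: eq_bigr => l _.
by rewrite inE /fP.
Qed.

Lemma card_Pset0 k : n = k * t.+1 -> #|Pset| = k.*2.
Proof. by move=> Hn; rewrite card_Pset_sum Hn sum_fP_k. Qed.

Lemma card_Pset1 k : n = k * t.+1 + t -> #|Pset| = (k.*2).+1.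
Proof.
move=> Hn; rewrite card_Pset_sum Hn (@big_cat_nat _ _ _ (k * t.+1)) //=; last by rewrite leq_addr.
rewrite sum_fP_k sum_shift (eq_big_nat _ _ (F2 := fP)); first by rewrite sum_fP_t addn1.
by move=> r Hr; apply: fP_block; lia.
Qed.

End Part_M6.

End Part_M6.
Import Part_M6.

Module Part_M7.
From mathcomp Require Import all_boot all_order all_algebra zify.
Set Implicit Arguments. Unset Strict Implicit. Unset Printing Implicit Defensive.

Section Part_M7.
Variables (n' t : nat).
Hypothesis ht : 0 < t.
Local Notation n := n'.+1.
Local Notation K := (kbasis n n).
Local Notation inI := (in_path_ideal (line_graph n) t).
Local Notation valid := (kvalid inI (j:=n)).
Local Notation lev := (@lev n' t).
Local Notation hits := (@hits n' t).
Local Notation Pset := (Pset n' t).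
Local Notation aexp := (@aexp n').
Local Notation piv := (@piv n' t).
Local Notation Up := (Up n' t).
Local Notation Down := (Down n' t).
Local Notation Crit := (Crit n' t).

Definition ucrit : K := (Pset, [ffun l => inord (Bm Pset l)]).
Definition ccond := (n %% t.+1 == 0) || (n %% t.+1 == t).

Lemma crit_eq i (u : K) : u \in Crit i -> [/\ ccond, u = ucrit & i = #|Pset|].
Proof.
rewrite !inE negb_or => /andP[/andP[Hnu Hnd] Hv].
rewrite Hv /= in Hnu Hnd.
case E: [pick l | 1 < aexp u l] => [l|].
  have Hp : piv u = Some l by rewrite /Part_M4.piv E.
  rewrite Hp negbK in Hnd.
  have Ha : 1 < aexp u l by case: pickP E => // x Hx [<-].
  have [Hn Hd] := valid_dnA ht Hv Hnd Ha.
  by rewrite Hp Hnd Hn Hd in Hnu.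
have HB := pick_none E.
have Hu := caseB_u ht Hv HB.
have Hh := caseB_hits ht Hv HB.
have [_ _ H3] := lev_spec t u.1.
have [Hc Hi] : ccond /\ u.1 = Pset.
  move: Hnu Hnd; rewrite /Part_M4.piv E; case: insubP => [c Hlt Ec|Hnlt] Hnu Hnd.
    rewrite negbK in Hnd.
    have H0 : u.2 c < n by rewrite Hu /Bm Hnd.
    rewrite Hnd H0 /= (valid_dnB ht Hv HB Hnd) in Hnu.
    have [Hn HS] := crit_shape ht Hh Hnd Ec Hnu.
    split => //; apply/orP; right; rewrite Hn Ec res_block //.
  have Hn : lev u.1 * t.+1 = n by lia.
  split; last exact: lev_full.
  by apply/orP; left; rewrite -Hn modnMl.
split => //.
  case: u Hv Hu Hi {Hnu Hnd E HB Hh H3} => S m Hv Hu /= HS; congr pair => //.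
  apply/ffunP => l; apply: val_inj; rewrite ffunE /= inordK; first by rewrite Hu HS.
  by rewrite /Bm; case: (l \in Pset).
by case/and4P: Hv => /eqP <-; rewrite Hi.
Qed.

Lemma ucrit_in : ccond -> ucrit \in Crit #|Pset|.
Proof.
move=> Hc.
have Eu2 l : (ucrit.2 l : nat) = Bm Pset l.
  by rewrite /ucrit /= ffunE inordK // /Bm; case: (l \in Pset).
have Hv : valid #|Pset| ucrit.
  apply/and4P; split => //.
  - by have := max_card Pset; rewrite card_ord.
  - rewrite (eq_bigr _ (fun l _ => Eu2 l)).
    have -> : \sum_(l < n) Bm Pset l = #|~: Pset|.
      by rewrite -sum_mem; apply: eq_bigr => l _; rewrite inE.
    by have HC := cardsC Pset; rewrite card_ord in HC; apply/eqP; lia.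
  - have := @Pset_hits n' t ht; rewrite /Part_M1.hits; congr negb; apply: inI_ext => // l.
    by rewrite Eu2.
have HB : forall l, aexp ucrit l <= 1.
  by move=> l; rewrite /aexp Eu2 /Bm; case: (l \in ucrit.1).
have E : [pick l | 1 < aexp ucrit l] = None.
  by case: pickP => // x; rewrite ltnNge HB.
have Ediv := divn_eq n t.+1.
have Hn : n = n %/ t.+1 * t.+1 \/ n = n %/ t.+1 * t.+1 + t.
  by case/orP: Hc => /eqP H; [left|right]; rewrite {1}Ediv H ?addn0.
have Hlev : lev Pset = n %/ t.+1 by apply: Pset_lev.
rewrite !inE Hv !andbT negb_or /Part_M4.piv E /= Hlev.
case: insubP => [c Hlt Ec|Hnlt] //=.
have HcP : c \in Pset by rewrite inE Ec modnMl eqxx.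
have Ec' : nat_of_ord c = n %/ t.+1 * t.+1 := Ec.
apply/andP; split; last by rewrite negbK.
apply/and3P => -[_ _]; rewrite (valid_dnB ht Hv HB HcP); apply/negP.
case: Hn => Hn; first by move: Hlt; rewrite -Hn ltnn.
by apply: (Pset_dn ht); [rewrite Ec' -Hn | rewrite Ec' modnMl].
Qed.

Lemma card_crit i : #|Crit i| = ccond && (i == #|Pset|).
Proof.
case: (boolP (ccond && (i == #|Pset|))) => [/andP[Hc /eqP Hi]|H].
  have -> : Crit i = [set ucrit].
    apply/setP => u; rewrite inE; apply/idP/eqP => [/crit_eq[_ -> _] //|->].
    by rewrite Hi; exact: ucrit_in.
  by rewrite cards1.
apply/eqP; rewrite cards_eq0; apply: contraNT H => /set0Pn[u /crit_eq[Hc _ Hi]].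
by rewrite Hc Hi eqxx.
Qed.

End Part_M7.

End Part_M7.
Import Part_M7.

Module Part_M8.
From mathcomp Require Import all_boot all_order all_algebra zify.
Set Implicit Arguments. Unset Strict Implicit. Unset Printing Implicit Defensive.

Section Part_M8.
Variables (F : fieldType) (n' t : nat).
Hypothesis ht : 0 < t.
Local Notation n := n'.+1.
Local Notation K := (kbasis n n).
Local Notation inI := (in_path_ideal (line_graph n) t).
Local Notation valid := (kvalid inI (j:=n)).
Local Notation Pset := (Pset n' t).
Local Notation Up := (Up n' t).
Local Notation Down := (Down n' t).
Local Notation Crit := (Crit n' t).
Local Notation r j := (\rank (kdiff F inI n j)).
Local Notation V j := [set u : K | valid j u].

Lemma kdiffE j : kdiff F inI n j = mkmx (kdiff_entry F inI (j:=n) j).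
Proof. by []. Qed.

Lemma A_up j : #|Up j| <= r j.
Proof.
rewrite kdiffE; apply: (rank_lower (psi := @psi n' t) (rho := fun u : K => lev t u.1)).
  by move=> u Hu; apply: entry_up.
by move=> u u' Hu Hu' Hne He; apply: (tri ht Hu Hu' Hne He).
Qed.

Lemma B_sum j : r j.+1 + r j <= #|V j|.
Proof.
rewrite !kdiffE; apply: rank_sum.
- by move=> u v /entry_nz[_ Hv _]; rewrite inE.
- by move=> v w /entry_nz[Hv _ _]; rewrite inE.
- by move=> u w; apply: dd0; apply: inI_mono.
Qed.

Lemma D_card j : #|V j| = #|Up j| + #|Up j.+1| + #|Crit j|.
Proof.
rewrite -(@card_DU n' t ht).
have HU : Up j \subset V j by apply/subsetP => u; rewrite !inE => /andP[].
have HD : Down j \subset V j by apply/subsetP => u; rewrite !inE => /andP[].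
have Hdis : [disjoint Up j & Down j].
  rewrite -setI_eq0; apply/eqP/setP => u; rewrite !inE.
  case: (Part_M4.piv t u) => [c|]; last by rewrite !andbF.
  by case: (c \in u.1); rewrite ?andbF.
rewrite /Part_M4.Crit.
have := cardsID (Up j :|: Down j) (V j).
rewrite (setIidPr _); last by rewrite subUset HU HD.
by rewrite cardsU (disjoint_setI0 Hdis) cards0 subn0; lia.
Qed.

End Part_M8.

End Part_M8.
Import Part_M8.

From mathcomp Require Import all_boot all_order all_algebra zify.

Lemma rhs_eq (n' t : nat) (ht : 0 < t) (i : nat) :
  (if n'.+1 %% t.+1 == 0 then nat_of_bool (i == (2 * n'.+1) %/ t.+1)
   else if n'.+1 %% t.+1 == t then nat_of_bool (i.+1 == (2 * n'.+1 + 2) %/ t.+1)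
   else 0) = nat_of_bool (ccond n' t && (i == #|Pset n' t|)).
Proof.
have Ediv := divn_eq n'.+1 t.+1.
rewrite /ccond; case: eqP => [H0|H0] /=.
  have Hn : n'.+1 = n'.+1 %/ t.+1 * t.+1 by rewrite {1}Ediv H0 addn0.
  rewrite (card_Pset0 ht Hn) {1}Hn mulnA mulnK // mul2n.
  by [].
case: eqP => [Ht|Ht] //=.
have Hn : n'.+1 = n'.+1 %/ t.+1 * t.+1 + t by rewrite {1}Ediv Ht.
rewrite (card_Pset1 ht Hn).
have -> : 2 * n'.+1 + 2 = (n'.+1 %/ t.+1).*2.+2 * t.+1.
  rewrite {1}Hn; lia.
by rewrite mulnK // eqSS.
Qed.

Theorem mainTheorem5 (F : fieldType) (t n : nat) (ht : 1 <= t) (hn : 1 <= n)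
  (i : nat) (hi : 1 <= i) :
  betti F (in_path_ideal (line_graph n) t) n i =
  if n %% t.+1 == 0 then nat_of_bool (i == (2 * n) %/ t.+1)
  else if n %% t.+1 == t then nat_of_bool (i.+1 == (2 * n + 2) %/ t.+1)
  else 0.
Proof.
case: n hn => // n' _.
rewrite (@rhs_eq n' t ht i) /betti.
case: i hi => // i' _.
have A0 := @A_up F n' t ht i'.
have A1 := @A_up F n' t ht i'.+1.
have A2 := @A_up F n' t ht i'.+2.
have A3 := @A_up F n' t ht i'.+3.
have B0 := @B_sum F n' t i'.
have B1 := @B_sum F n' t i'.+1.
have B2 := @B_sum F n' t i'.+2.
have D0 := @D_card n' t ht i'.
have D1 := @D_card n' t ht i'.+1.
have D2 := @D_card n' t ht i'.+2.
have C0 := @card_crit n' t ht i'.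
have C1 := @card_crit n' t ht i'.+1.
have C2 := @card_crit n' t ht i'.+2.
rewrite -C1.
have H01 : #|Crit n' t i'| + #|Crit n' t i'.+1| <= 1.
  rewrite C0 C1; case: (ccond n' t) => //=; case: eqP => [->|]; last by case: eqP.
  by rewrite eqn_leq ltnn.
have H12 : #|Crit n' t i'.+1| + #|Crit n' t i'.+2| <= 1.
  rewrite C1 C2; case: (ccond n' t) => //=; case: eqP => [->|]; last by case: eqP.
  by rewrite eqn_leq ltnn.
clear C0 C1 C2.
set V0 := #|[set u | kvalid _ i' u]| in B0 D0 *.
set V1 := #|[set u | kvalid _ i'.+1 u]| in B1 D1 *.
set V2 := #|[set u | kvalid _ i'.+2 u]| in B2 D2 *.
set R0 := \rank (kdiff F _ _ i') in A0 B0 *.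
set R1 := \rank (kdiff F _ _ i'.+1) in A1 B0 B1 *.
set R2 := \rank (kdiff F _ _ i'.+2) in A2 B1 B2 *.
set R3 := \rank (kdiff F _ _ i'.+3) in A3 B2 *.
lia.
Qed.
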